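(* Consider the online fair-division setting with deterministic feedback and the mechanism $\mathcal{M}_4$ described in the context. If all agents report truthfully, then $L_T\le 1+2n\,v_{\max}\rho_{\max}$ for all $T\ge 1$, and for every agent $i$ and every $T\ge1$, $U^e_{iT}-U_{iT}\le L_i\rho_{\max}$.
   Context: Resource and MMF: a divisible resource of size $1$ is shared by $n$ agents with entitlements $e_i>0$, $\sum_ie_i=1$. MMF$(e,d)$ on reported demands $d_1,\dots,d_n\ge0$: set $r=1$, $E=1$, $S=\{1,\dots,n\}$, $a=0$; process agents $j$ in ascending order of $d_j/e_j$; if $d_j<re_j/E$, set $a_j=d_j$, remove $j$ from $S$, $r\leftarrow r-d_j$, $E\leftarrow E-e_j$ and continue; otherwise set $a_k=re_k/E$ for all $k\in S$ and stop; output $a$. Online model: rounds $t=1,2,\dots$; agent $i$ has load $v_{it}\in(v_{\min},v_{\max}]$ ($v_{\min}>0$, fixed sequence), unknown non-decreasing payoff $f_i$, threshold $\alpha_i$, unit demand $\rho_i=f_i^{-1}(\alpha_i)\in[0,\rho_{\max}]$ ($\rho_{\max}$ known, $v_{\max}\rho_{\max}\le1$), true demand $d^*_{it}=v_{it}\rho_i$. Utility $u_i$ (of allocation per unit load) is strictly increasing on $[0,\rho_i]$, constant on $[\rho_i,\infty)$, $L_i$-Lipschitz. Deterministic feedback: receiving $a_{it}$ gives reward $X_{it}=f_i(a_{it}/v_{it})$. Mechanism $\mathcal{M}_4$: keep bounds $(\underline\rho_i,\bar\rho_i)$ initialised to $(0,\rho_{\max})$. The update with a pair $(x,X)$ is: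 if $X<\alpha_i$ set $\underline\rho_i\leftarrow\max(\underline\rho_i,x)$, else $\bar\rho_i\leftarrow\min(\bar\rho_i,x)$. Round 1: allocate $e_i$ to each agent, collect $X_i$, update with $(a_i/v_i,X_i)$. Each round $t\ge2$: set $\hat\rho_i=(\underline\rho_i+\bar\rho_i)/2$, obtain loads $v_i$, compute $a=$MMF$(e,(v_i\hat\rho_i)_i)$, allocate $a$, collect rewards $X_i$ and update each agent with $(a_i/v_i,X_i)$. Quantities: $\ell_{ur}(a)=1-\sum_ia_i$, $\ell_{or}(d,a)=\sum_i(a_i-d_i)^+$, $\ell_{ud}(d,a)=\sum_i(d_i-a_i)^+$, $\ell=\min(\ell_{ur}+\ell_{or},\ell_{ud})$, $L_T=\sum_{t\le T}\ell(d^*_t,a_t)$; $U_{iT}=\sum_{t\le T}u_i(a_{it}/v_{it})$, $U^e_{iT}=\sum_{t\le T}u_i(e_i/v_{it})$. *)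

(* Defs.v *)
From HB Require Import structures.
From mathcomp Require Import all_boot all_order all_algebra.
From mathcomp Require Import reals.
Set Implicit Arguments. Unset Strict Implicit. Unset Printing Implicit Defensive.
Import Order.TTheory GRing.Theory Num.Theory.
Local Open Scope ring_scope.

Section Defs.
Variables (R : realType) (n : nat).
Implicit Types (e d a : 'I_n -> R).

(** MMF(e,d): process agents in ascending order of d_j/e_j.  [mmf_rec s r E]
    handles the remaining (sorted) list s with remaining resource r and
    remaining entitlement E; agents already removed are set by outer calls. *)
Fixpoint mmf_rec (e d : 'I_n -> R) (s : seq 'I_n) (r E : R) : 'I_n -> R :=
  match s with
  | [::] => fun _ => 0
  | j :: s' =>
      if d j < r * e j / E then
        let rest := mmf_rec e d s' (r - d j) (E - e j) in
        fun k => if k == j then d j else rest k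
      else fun k => if k \in (j :: s') then r * e k / E else 0
  end.

Definition mmf (e d : 'I_n -> R) : 'I_n -> R :=
  mmf_rec e d (sort (fun j k : 'I_n => d j / e j <= d k / e k) (enum 'I_n)) 1 1.

Definition upd (alpha : R) (b : R * R) (x X : R) : R * R :=
  if X < alpha then (Num.max b.1 x, b.2) else (b.1, Num.min b.2 x).

(** Mechanism M4 under deterministic feedback (rewards X = f_i(a_i/v_i)
    reported truthfully).  v t i is the load of agent i in round t (t >= 1).
    [m4_bounds t] are the bounds (lo_i, hi_i) after rounds 1..t;
    [m4_alloc t] is the allocation of round t (t >= 1). *)
Section Mech.
Variables (e : 'I_n -> R) (v : nat -> 'I_n -> R) (f : 'I_n -> R -> R)
          (alpha : 'I_n -> R) (rho_max : R).

Fixpoint m4_bounds (t : nat) : 'I_n -> R * R :=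
  match t with
  | 0 => fun _ => (0, rho_max)
  | t'.+1 =>
      let b := m4_bounds t' in
      let a := if t' == 0%N then e
               else mmf e (fun i => v t'.+1 i * (((b i).1 + (b i).2) / 2)) in
      fun i => upd (alpha i) (b i) (a i / v t'.+1 i) (f i (a i / v t'.+1 i))
  end.

Definition m4_alloc (t : nat) : 'I_n -> R :=
  match t with
  | 0 => fun _ => 0
  | t'.+1 =>
      let b := m4_bounds t' in
      if t' == 0%N then e
      else mmf e (fun i => v t'.+1 i * (((b i).1 + (b i).2) / 2))
  end.
End Mech.

Definition ell_ur a : R := 1 - \sum_i a i.
Definition ell_or d a : R := \sum_i Num.max (a i - d i) 0.
Definition ell_ud d a : R := \sum_i Num.max (d i - a i) 0.
Definition ell d a : R := Num.min (ell_ur a + ell_or d a) (ell_ud d a).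

End Defs.

(* Main.v *)
Require Import Defs.
From HB Require Import structures.
From mathcomp Require Import all_boot all_order all_algebra.
From mathcomp Require Import reals.
From mathcomp Require Import ring lra.
Import Order.TTheory GRing.Theory Num.Theory.
Local Open Scope ring_scope.

Lemma mmf_rec_spec (R : realType) (n : nat) (e d : 'I_n -> R) :
  (forall i, 0 < e i) -> (forall i, 0 <= d i) ->
  forall s : seq 'I_n, uniq s ->
  sorted (fun j k : 'I_n => d j / e j <= d k / e k) s ->
  forall r E, E = \sum_(k <- s) e k -> E <= r ->
  let a := mmf_rec e d s r E in
  (forall k, k \in s -> 0 <= a k /\ (a k = d k \/ (e k <= a k /\ a k <= d k)))
  /\ (forall k, k \notin s -> a k = 0)
  /\ ((forall k, k \in s -> a k = d k) \/ \sum_(k <- s) a k = r).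
Proof.
move=> e0 d0; elim=> [|j s IH] /= us ss r E HE HEr.
  by split=> //; split=> //; left.
have Es : 0 <= \sum_(k <- s) e k by apply: sumr_ge0 => k _; apply/ltW.
rewrite big_cons in HE.
have E0 : 0 < E by rewrite HE; have := e0 j; lra.
move/andP: us => [js us].
have ss' : sorted (fun j k : 'I_n => d j / e j <= d k / e k) s := path_sorted ss.
case: ifP => Hd.
- have Hr : \sum_(k <- s) e k <= r - d j.
    have : r * e j / E <= r - (E - e j).
      rewrite -subr_ge0.
      have -> : r - (E - e j) - r * e j / E = (r - E) * (E - e j) / E.
        by field; rewrite gt_eqF.
      apply: divr_ge0; last exact: ltW.
      apply: mulr_ge0; lra.
    move: (Hd); rewrite HE; lra.
  have [IH1 [IH2 IH3]] := IH us ss' (r - d j) (E - e j) ltac:(rewrite HE; lra) ltac:(rewrite HE; lra).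
  split; [|split].
  + move=> k; rewrite inE; case: eqP => [-> _|/eqP kj /= ks].
      by split; [exact: d0|left].
    exact: IH1.
  + move=> k; rewrite inE negb_or => /andP[kj ks]; rewrite (negbTE kj); exact: IH2.
  + case: IH3 => [IH3|IH3].
      left=> k; rewrite inE; case: eqP => [-> //|/eqP kj /= ks]; exact: IH3.
    right; rewrite big_cons eqxx.
    rewrite (@eq_big_seq _ _ _ _ _ _ (mmf_rec e d s (r - d j) (E - e j))); first by rewrite IH3; lra.
    by move=> k ks; case: eqP => // kj; move: js; rewrite -kj ks.
- have rE : 1 <= r / E by rewrite ler_pdivlMr // mul1r.
  have key : forall k, k \in j :: s -> e k <= r * e k / E /\ r * e k / E <= d k.
    move=> k ks; split.
      rewrite mulrAC -{1}(mul1r (e k)); apply: ler_wpM2r => //; exact: ltW.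
    have Hj : r / E <= d j / e j.
      rewrite ler_pdivlMr // mulrAC ler_pdivrMr //; move/negbT: Hd; rewrite -leNgt.
      by rewrite ler_pdivrMr // [_ * e j]mulrC.
    have Hk : r / E <= d k / e k.
      move: ks; rewrite inE => /orP[/eqP->//|ks].
      apply: le_trans Hj _.
      have := order_path_min _ ss.
      have tr : transitive (fun j k : 'I_n => d j / e j <= d k / e k).
        by move=> x y z; apply: le_trans.
      by move=> /(_ tr) /allP /(_ k ks).
    rewrite mulrAC; have := ler_wpM2r (ltW (e0 k)) Hk.
    by rewrite divfK // gt_eqF.
  split; [|split].
  + move=> k ks; rewrite ks; have [k1 k2] := key k ks; split.
      apply: le_trans k1; exact: ltW.
    by right.
  + by move=> k /negbTE ->.
  + right; rewrite (@eq_big_seq _ _ _ _ _ _ (fun k => r / E * e k)).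
      by rewrite -mulr_sumr big_cons -HE divfK // gt_eqF.
    by move=> k ->; rewrite mulrAC.
Qed.

Lemma mmf_spec (R : realType) (n : nat) (e d : 'I_n -> R) :
  (forall i, 0 < e i) -> \sum_i e i = 1 -> (forall i, 0 <= d i) ->
  let a := mmf e d in
  (forall k, 0 <= a k /\ (a k = d k \/ (e k <= a k /\ a k <= d k)))
  /\ ((forall k, a k = d k) \/ \sum_k a k = 1).
Proof.
move=> e0 e1 d0 /=; rewrite /mmf.
set leT := (fun j k : 'I_n => d j / e j <= d k / e k).
set s := sort leT (enum 'I_n).
have ps : perm_eq s (enum 'I_n) by rewrite perm_sort.
have Hs : forall k, k \in s by move=> k; rewrite (perm_mem ps) mem_enum.
have us : uniq s by rewrite sort_uniq enum_uniq.
have ss : sorted leT s.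
  apply: sort_sorted => x y; exact: le_total.
have HE : 1 = \sum_(k <- s) e k by rewrite (perm_big _ ps) big_enum.
have [H1 [_ H3]] := @mmf_rec_spec R n e d e0 d0 s us ss 1 1 HE (lexx _).
split; first by move=> k; exact: H1.
case: H3 => H3; first by left=> k; exact: H3.
by right; rewrite -big_enum -(perm_big _ ps).
Qed.
Lemma upd_mono (R : realType) (al : R) (b : R * R) x X :
  b.1 <= (upd al b x X).1 /\ (upd al b x X).2 <= b.2.
Proof.
rewrite /upd; case: ifP => _ /=; split=> //.
- by rewrite le_max lexx.
- by rewrite ge_min lexx.
Qed.

Lemma upd_inv (R : realType) (al rho rmax : R) (b : R * R) x X :
  0 <= x -> (X < al -> x <= rho) -> (al <= X -> rho <= x) ->
  0 <= b.1 -> b.1 <= rho -> rho <= b.2 -> b.2 <= rmax ->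
  let b' := upd al b x X in
  [/\ 0 <= b'.1, b'.1 <= rho, rho <= b'.2 & b'.2 <= rmax].
Proof.
move=> x0 H1 H2 l0 lr rh hm /=; rewrite /upd; case: ltP => HX /=.
- have := H1 HX => xr; split=> //; first by rewrite le_max l0.
  by rewrite ge_max lr xr.
- have := H2 HX => xr; split=> //; first by rewrite le_min rh xr.
  by rewrite ge_min hm.
Qed.

Lemma upd_halve (R : realType) (al : R) (b : R * R) x X :
  b.1 <= b.2 -> x = (b.1 + b.2) / 2 ->
  let b' := upd al b x X in 2 * (b'.2 - b'.1) <= b.2 - b.1.
Proof.
move=> lh -> /=; rewrite /upd; case: ifP => _ /=.
- have : (b.1 + b.2) / 2 <= Num.max b.1 ((b.1 + b.2) / 2) by rewrite le_max lexx orbT.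
  lra.
- have : Num.min b.2 ((b.1 + b.2) / 2) <= (b.1 + b.2) / 2 by rewrite ge_min lexx orbT.
  lra.
Qed.

Lemma upd_halve_over (R : realType) (al : R) (b : R * R) x X :
  b.1 <= b.2 -> x <= (b.1 + b.2) / 2 -> al <= X ->
  let b' := upd al b x X in 2 * (b'.2 - b'.1) <= b.2 - b.1.
Proof.
move=> lh xh aX /=; rewrite /upd ltNge aX /=.
have : Num.min b.2 x <= x by rewrite ge_min lexx orbT.
lra.
Qed.
Lemma aux_mul (R : realType) (w wm y z : R) :
  0 <= w -> w <= wm -> y <= z -> 0 <= z -> w * y <= wm * z.
Proof.
move=> w0 wwm yz z0; case: (leP y 0) => y0.
  apply: le_trans (_ : 0 <= _); first by rewrite mulr_ge0_le0.
  apply: mulr_ge0 => //; exact: le_trans wwm.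
apply: ler_pM => //; exact: ltW.
Qed.

Section Mech.
Variables (R : realType) (n : nat)
    (e : 'I_n -> R) (v : nat -> 'I_n -> R) (f : 'I_n -> R -> R)
    (alpha rho Lip : 'I_n -> R) (u : 'I_n -> R -> R)
    (v_min v_max rho_max : R).
Hypotheses (e0 : forall i, 0 < e i) (e1 : \sum_i e i = 1) (vmin0 : 0 < v_min)
  (vb : forall t i, (1 <= t)%N -> v_min < v t i <= v_max)
  (rb : forall i, 0 <= rho i <= rho_max)
  (fge : forall i x, 0 <= x -> alpha i <= f i x -> rho i <= x)
  (flt : forall i x, 0 <= x -> f i x < alpha i -> x <= rho i).

Let B t i := m4_bounds e v f alpha rho_max t i.
Let A t := m4_alloc e v f alpha rho_max t.
Let W t i := (B t i).2 - (B t i).1.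
Let dh t i := v t.+1 i * (((B t i).1 + (B t i).2) / 2).

Lemma vpos t i : (1 <= t)%N -> 0 < v t i.
Proof. by move=> /(vb _ i) /andP[H _]; apply: lt_trans H. Qed.

Lemma vlemax t i : (1 <= t)%N -> v t i <= v_max.
Proof. by move=> /(vb _ i) /andP[_ H]. Qed.

Lemma alloc_succ t : (1 <= t)%N -> A t.+1 = mmf e (dh t).
Proof. by case: t. Qed.

Lemma alloc1 : A 1 = e.
Proof. by []. Qed.

Lemma bounds_succ t i : B t.+1 i =
  upd (alpha i) (B t i) (A t.+1 i / v t.+1 i) (f i (A t.+1 i / v t.+1 i)).
Proof. by case: t. Qed.

Definition inv t := forall i,
  [/\ 0 <= (B t i).1, (B t i).1 <= rho i, rho i <= (B t i).2 & (B t i).2 <= rho_max].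

Lemma dh_ge0 t : inv t -> forall i, 0 <= dh t i.
Proof.
move=> H i; rewrite /dh; apply: mulr_ge0; first exact/ltW/vpos.
have [h1 h2 h3 h4] := H i; lra.
Qed.

Lemma alloc_ge0 t : inv t -> forall i, 0 <= A t.+1 i.
Proof.
move=> H i; case: t H => [|t] H; first by rewrite alloc1; apply/ltW.
rewrite alloc_succ //; have [H1 _] := @mmf_spec R n e _ e0 e1 (@dh_ge0 t.+1 H).
by case: (H1 i).
Qed.

Lemma inv_all t : inv t.
Proof.
elim: t => [|t IH] i.
  rewrite /B /=; have := rb i; case/andP => r0 r1; split=> //; lra.
rewrite bounds_succ.
have x0 : 0 <= A t.+1 i / v t.+1 i.
  by apply: divr_ge0; [exact: alloc_ge0|exact/ltW/vpos].
have [h1 h2 h3 h4] := IH i.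
apply: upd_inv => //.
- exact: flt.
- exact: fge.
Qed.


Lemma W_mono t i : W t.+1 i <= W t i.
Proof.
rewrite /W bounds_succ.
have [h1 h2] := upd_mono _ (alpha i) (B t i) (A t.+1 i / v t.+1 i) (f i (A t.+1 i / v t.+1 i)).
lra.
Qed.

Lemma W_ge0 t i : 0 <= W t i.
Proof. have [h1 h2 h3 h4] := inv_all t i; rewrite /W; lra. Qed.

Lemma W_le t i : W t i <= rho_max.
Proof. have [h1 h2 h3 h4] := inv_all t i; rewrite /W; lra. Qed.

Lemma halve_eq t i : (1 <= t)%N -> A t.+1 i = dh t i -> 2 * W t.+1 i <= W t i.
Proof.
move=> t1 Ha; rewrite /W bounds_succ.
have [h1 h2 h3 h4] := inv_all t i.
apply: upd_halve; first lra.
by rewrite Ha /dh [_ * _ / _]mulrC mulKf // gt_eqF // vpos.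
Qed.

Lemma halve_over t i : (1 <= t)%N -> A t.+1 i <= dh t i ->
  v t.+1 i * rho i < A t.+1 i -> 2 * W t.+1 i <= W t i.
Proof.
move=> t1 Ha Hr; rewrite /W bounds_succ.
have [h1 h2 h3 h4] := inv_all t i.
have vp := @vpos t.+1 i isT.
have x0 : 0 <= A t.+1 i / v t.+1 i by apply: divr_ge0; [apply: alloc_ge0; exact: inv_all|exact: ltW].
apply: upd_halve_over; first lra.
  by rewrite ler_pdivrMr // mulrC -/(dh t i).
rewrite leNgt; apply/negP => /(@flt i _ x0); rewrite ler_pdivrMr // mulrC.
by rewrite leNgt Hr.
Qed.


Hypotheses
  (uinc : forall i x y, 0 <= x -> x < y -> y <= rho i -> u i x < u i y)
  (ucst : forall i x, rho i <= x -> u i x = u i (rho i))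
  (ulip : forall i x y, 0 <= x -> 0 <= y -> `|u i x - u i y| <= Lip i * `|x - y|).

Lemma u_le_rho i x : 0 <= x -> u i x <= u i (rho i).
Proof.
move=> x0; case: (ltP x (rho i)) => xr.
  exact/ltW/uinc.
by rewrite ucst.
Qed.

Lemma u_mono i x y : 0 <= x -> x <= y -> u i x <= u i y.
Proof.
move=> x0 xy; case: (leP y (rho i)) => yr.
  move: xy; rewrite le_eqVlt => /orP[/eqP->//|xy]; exact/ltW/uinc.
rewrite (@ucst i y (ltW yr)); apply: u_le_rho => //.
Qed.

Lemma Lip_ge0 i : 0 <= Lip i.
Proof.
have := @ulip i 0 1 (lexx 0) ler01; rewrite sub0r normrN normr1 mulr1.
apply: le_trans; exact: normr_ge0.
Qed.

Lemma round_u t i : (1 <= t)%N ->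
  u i (e i / v t.+1 i) - u i (A t.+1 i / v t.+1 i) <= Lip i * (W t i - W t.+1 i).
Proof.
move=> t1.
have vp := @vpos t.+1 i isT.
have WW := W_mono t i; have L0 := Lip_ge0 i.
have R0 : 0 <= Lip i * (W t i - W t.+1 i) by apply: mulr_ge0 => //; lra.
have [h1 h2 h3 h4] := inv_all t i.
have dh0 := @dh_ge0 t (inv_all t).
have [H1 _] := @mmf_spec R n e _ e0 e1 dh0.
have [a0 Hc] := H1 i; rewrite -(@alloc_succ t t1) in a0 Hc.
case: Hc => [Ha|[Hea _]].
- have hv := @halve_eq t i t1 Ha.
  have -> : A t.+1 i / v t.+1 i = ((B t i).1 + (B t i).2) / 2.
    by rewrite Ha /dh [_ * _ / _]mulrC mulKf // gt_eqF.
  have m0 : 0 <= ((B t i).1 + (B t i).2) / 2 by lra.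
  have ue := @u_le_rho i _ (divr_ge0 (ltW (e0 i)) (ltW vp)).
  case: (leP (rho i) (((B t i).1 + (B t i).2) / 2)) => hr.
    rewrite (@ucst i _ hr); lra.
  have := @ulip i _ _ (proj1 (andP (rb i))) m0.
  rewrite (@ger0_norm _ (rho i - _)); last (rewrite subr_ge0; exact: ltW).
  have : Lip i * (rho i - ((B t i).1 + (B t i).2) / 2) <= Lip i * (W t i - W t.+1 i).
    apply: ler_wpM2l => //; rewrite /W in hv *; lra.
  move=> H2 H3.
  have := ler_norm (u i (rho i) - u i (((B t i).1 + (B t i).2) / 2)).
  lra.
- have : u i (e i / v t.+1 i) <= u i (A t.+1 i / v t.+1 i).
    apply: u_mono; first by apply: divr_ge0; apply: ltW.
    by apply: ler_wpM2r => //; rewrite invr_ge0; apply: ltW.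
  lra.
Qed.


Let dstar t i := v t i * rho i.

Lemma round1_ell : ell (dstar 1) (A 1) <= 1.
Proof.
rewrite alloc1 /ell ge_min; apply/orP; left.
rewrite /ell_ur /ell_or e1 subrr add0r -e1; apply: ler_sum => i _.
rewrite ge_max; apply/andP; split; last exact: ltW.
rewrite lerBlDr lerDl; apply: mulr_ge0; first exact/ltW/vpos.
by case/andP: (rb i).
Qed.

Lemma round_ell t : (1 <= t)%N ->
  ell (dstar t.+1) (A t.+1) <= \sum_i v_max * (W t i - W t.+1 i).
Proof.
move=> t1.
have dh0 := @dh_ge0 t (inv_all t).
have [H1 H2] := @mmf_spec R n e _ e0 e1 dh0.
rewrite -(@alloc_succ t t1) in H1 H2.
have common : forall i, [/\ 0 < v t.+1 i, v t.+1 i <= v_max & W t.+1 i <= W t i].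
  move=> i.
  by split=> //; [exact: vpos|exact: vlemax|exact: W_mono].
case: H2 => H2.
- rewrite /ell ge_min; apply/orP; right.
  apply: ler_sum => i _; rewrite /dstar H2 /dh.
  have [vp vm WW] := common i; have [h1 h2 h3 h4] := inv_all t i.
  have hv := @halve_eq t i t1 (H2 i).
  rewrite ge_max; apply/andP; split; last first.
    apply: mulr_ge0; [apply: le_trans vm; exact: ltW| lra].
  rewrite -mulrBr; apply: aux_mul; [exact: ltW|done| |]; rewrite /W in hv WW *; lra.
- rewrite /ell ge_min; apply/orP; left.
  rewrite /ell_ur H2 subrr add0r; apply: ler_sum => i _.
  have [vp vm WW] := common i; have [h1 h2 h3 h4] := inv_all t i.
  have [a0 Hc] := H1 i.
  have ad : A t.+1 i <= dh t i by case: Hc => [->|[_ ->]].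
  rewrite ge_max; apply/andP; split; last first.
    apply: mulr_ge0; [apply: le_trans vm; exact: ltW| lra].
  rewrite /dstar; case: (leP (A t.+1 i) (v t.+1 i * rho i)) => Hr.
    apply: le_trans (_ : 0 <= _); first lra.
    apply: mulr_ge0; [apply: le_trans vm; exact: ltW| lra].
  have hv := @halve_over t i t1 ad Hr.
  have -> : A t.+1 i - v t.+1 i * rho i = v t.+1 i * (A t.+1 i / v t.+1 i - rho i).
    by rewrite mulrBr [v t.+1 i * (_ / _)]mulrC divfK // gt_eqF.
  have xh : A t.+1 i / v t.+1 i <= ((B t i).1 + (B t i).2) / 2.
    by rewrite ler_pdivrMr // mulrC.
  apply: aux_mul; [exact: ltW|done| |]; rewrite /W in hv WW *; lra.
Qed.

Lemma sum_ell T : (1 <= T)%N ->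
  \sum_(1 <= t < T.+1) ell (dstar t) (A t) <= 1 + \sum_i v_max * (W 1 i - W T i).
Proof.
elim: T => [//|T IH] _.
case: T IH => [|T] IH.
  rewrite big_nat1; have := round1_ell.
  have -> : \sum_i v_max * (W 1 i - W 1 i) = 0.
    by rewrite big1 // => i _; rewrite subrr mulr0.
  lra.
rewrite big_nat_recr //=.
have := IH isT; have := @round_ell T.+1 isT.
have <- : \sum_i v_max * (W 1 i - W T.+1 i) + \sum_i v_max * (W T.+1 i - W T.+2 i)
   = \sum_i v_max * (W 1 i - W T.+2 i).
  by rewrite -big_split; apply: eq_bigr => i _ /=; rewrite -mulrDr addrA subrK.
lra.
Qed.

Lemma sum_u i T : (1 <= T)%N ->
  \sum_(1 <= t < T.+1) (u i (e i / v t i) - u i (A t i / v t i)) <= Lip i * (W 1 i - W T i).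
Proof.
elim: T => [//|T IH] _.
case: T IH => [|T] IH.
  by rewrite big_nat1 alloc1 !subrr mulr0.
rewrite big_nat_recr //=.
have := IH isT; have := @round_u T.+1 i isT.
have <- : Lip i * (W 1 i - W T.+1 i) + Lip i * (W T.+1 i - W T.+2 i)
   = Lip i * (W 1 i - W T.+2 i) by rewrite -mulrDr addrA subrK.
lra.
Qed.

Lemma final T : (1 <= T)%N ->
    (\sum_(1 <= t < T.+1)
        ell (fun i => v t i * rho i) (m4_alloc e v f alpha rho_max t)
       <= 1 + 2 * n%:R * v_max * rho_max)
    /\
    (forall i,
       \sum_(1 <= t < T.+1) u i (e i / v t i)
       - \sum_(1 <= t < T.+1) u i (m4_alloc e v f alpha rho_max t i / v t i)
       <= Lip i * rho_max).
Proof.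
move=> T1; split.
- apply: le_trans (@sum_ell T T1) _; rewrite lerD2l.
  have -> : 2 * n%:R * v_max * rho_max = \sum_(i < n) 2 * v_max * rho_max.
    by rewrite sumr_const card_ord -mulr_natr; ring.
  apply: ler_sum => i _.
  have vp := @vpos 1 i isT; have vm := @vlemax 1 i isT.
  have w1 := W_le 1 i; have wT := W_ge0 T i.
  have r0 : 0 <= rho_max by case/andP: (rb i) => a b; apply: le_trans b.
  have vm0 : 0 <= v_max by apply: le_trans vm; exact: ltW.
  have : v_max * (W 1 i - W T i) <= v_max * rho_max by apply: ler_wpM2l => //; lra.
  have : 0 <= v_max * rho_max by apply: mulr_ge0.
  lra.
- move=> i; rewrite -sumrB; apply: le_trans (@sum_u i T T1) _.
  apply: ler_wpM2l; first exact: Lip_ge0.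
  have w1 := W_le 1 i; have wT := W_ge0 T i; lra.
Qed.

End Mech.


Theorem theorem4 (R : realType) (n : nat)
    (e : 'I_n -> R) (v : nat -> 'I_n -> R) (f : 'I_n -> R -> R)
    (alpha rho Lip : 'I_n -> R) (u : 'I_n -> R -> R)
    (v_min v_max rho_max : R) :
  (forall i, 0 < e i) ->
  \sum_i e i = 1 ->
  0 < v_min ->
  (forall t i, (1 <= t)%N -> v_min < v t i <= v_max) ->
  v_max * rho_max <= 1 ->
  (* payoffs are non-decreasing *)
  (forall i x y, 0 <= x -> x <= y -> f i x <= f i y) ->
  (* rho_i = f_i^{-1}(alpha_i) (generalized inverse), in [0, rho_max] *)
  (forall i, 0 <= rho i <= rho_max) ->
  (forall i x, 0 <= x -> alpha i <= f i x -> rho i <= x) ->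
  (forall i x, 0 <= x -> f i x < alpha i -> x <= rho i) ->
  (* utilities *)
  (forall i x y, 0 <= x -> x < y -> y <= rho i -> u i x < u i y) ->
  (forall i x, rho i <= x -> u i x = u i (rho i)) ->
  (forall i x y, 0 <= x -> 0 <= y -> `|u i x - u i y| <= Lip i * `|x - y|) ->
  forall T : nat, (1 <= T)%N ->
    (\sum_(1 <= t < T.+1)
        ell (fun i => v t i * rho i) (m4_alloc e v f alpha rho_max t)
       <= 1 + 2 * n%:R * v_max * rho_max)
    /\
    (forall i,
       \sum_(1 <= t < T.+1) u i (e i / v t i)
       - \sum_(1 <= t < T.+1) u i (m4_alloc e v f alpha rho_max t i / v t i)
       <= Lip i * rho_max).
Proof.
move=> He0 He1 Hvmin Hvb _ _ Hrb Hfge Hflt Huinc Hucst Hulip T T1.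
have H := @final R n e v f alpha rho Lip u v_min v_max rho_max He0 He1 Hvmin Hvb Hrb Hfge Hflt Huinc Hucst Hulip T T1.
exact H.
Qed.
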